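(* Let $x_1\in\mathbb R$ with $|x_1|\le1$. For any $\alpha\in(0,1]$ and any $0\le\beta<\alpha/2$, $$I_{\alpha,\beta}:=\iiint_{u_1^2+u_2^2+v_2^2<1}\frac{|u_1-x_1|^{-1+\alpha}}{\big(u_1^2+u_2^2+v_2^2\big)^{1+\beta}}\,du_1\,du_2\,dv_2\le A_{\alpha,\beta}<\infty,$$ where the constant $A_{\alpha,\beta}$ is independent of $x_1$. *)

(* Defs.v *)
From HB Require Import structures.
From mathcomp Require Import all_boot all_order all_algebra.
From mathcomp Require Import all_classical all_reals all_analysis.
Set Implicit Arguments. Unset Strict Implicit. Unset Printing Implicit Defensive.
Import Order.TTheory GRing.Theory Num.Theory.
Local Open Scope classical_set_scope.
Local Open Scope ring_scope.

(* Lebesgue measure on R^3, realised as the product measure on (R * R) * R.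
   A point p : (R * R) * R is read as p = ((u1, u2), v2). *)
Definition leb3 (R : realType) :=
  ((@lebesgue_measure R \x @lebesgue_measure R) \x @lebesgue_measure R)%E.

Definition ball3 (R : realType) : set ((R * R) * R) :=
  [set p | p.1.1 ^+ 2 + p.1.2 ^+ 2 + p.2 ^+ 2 < 1].

Definition integrand3 (R : realType) (alpha beta x1 : R) (p : (R * R) * R) : R :=
  `|p.1.1 - x1| `^ (-1 + alpha) /
    (p.1.1 ^+ 2 + p.1.2 ^+ 2 + p.2 ^+ 2) `^ (1 + beta).

Definition I_ab (R : realType) (alpha beta x1 : R) : \bar R :=
  (\int[@leb3 R]_(p in @ball3 R) (integrand3 alpha beta x1 p)%:E)%E.

(* Main.v *)
Require Import Defs.
From HB Require Import structures.
From mathcomp Require Import all_boot all_order all_algebra.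
From mathcomp Require Import all_classical all_reals all_analysis.
From mathcomp Require Import measurable_realfun.
From mathcomp Require Import lra.
Import Order.TTheory GRing.Theory Num.Theory.
Import numFieldNormedType.Exports.
Local Open Scope ring_scope.
Local Open Scope classical_set_scope.

Section OneD.
Variable R : realType.
Notation mu := (@lebesgue_measure R).

Lemma cont_f (c s x : R) : x != c -> {for x, continuous (fun y : R => `|y - c| `^ s)}.
Proof.
move=> xc.
have hp : 0 < `|x - c| by rewrite normr_gt0 subr_eq0.
have H1 : {for x, continuous (fun y : R => `|y - c|)}.
  have H0 : {for x, continuous (fun y : R => y - c)}.
    by apply: cvgB; [exact: cvg_id| exact: cvg_cst].
  have H3 : {for (x - c), continuous (fun y : R => `|y|)}.
    by move=> ?; exact: norm_continuous.
  exact: (continuous_comp H0 H3).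
have H2 : {for `|x - c|, continuous (@powR R ^~ s)}.
  apply: differentiable_continuous; apply/derivable1_diffP.
  by apply: derivable_powR; rewrite in_itv/= andbT.
exact: (continuous_comp H1 H2).
Qed.

Lemma der_F (c s x : R) : c < x -> s < 1 ->
  is_derive x 1 (fun y : R => (1 - s)^-1 * (y - c) `^ (1 - s)) (`|x - c| `^ (- s)).
Proof.
move=> cx s1.
have xc0 : 0 < x - c by rewrite subr_gt0.
have h1 : is_derive x 1 (fun y : R => y - c) 1.
  by apply: is_derive_eq; rewrite subr0.
have h2 := @is_derive1_powR R (1 - s) (x - c) xc0.
have h3 := @is_derive1_comp R (@powR R ^~ (1 - s)) (fun y => y - c) x _ _ h2 h1.
have h4 := is_deriveZ ((1 - s)^-1) h3.
have -> : (fun y : R => (1 - s)^-1 * (y - c) `^ (1 - s)) =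
   (1 - s)^-1 *: ((@powR R ^~ (1 - s)) \o (fun y => y - c)) by [].
apply: is_derive_eq h4 _.
have s10 : 1 - s != 0 by rewrite subr_eq0 eq_sym lt_eqF.
rewrite mulr1 /GRing.scale /= mulrA mulVf // mul1r.
by rewrite gtr0_norm // addrAC subrr add0r.
Qed.

Lemma ftc_core (c e s : R) : 0 < e -> e < 2 -> s < 1 ->
  (\int[mu]_(x in `[(c + e)%R, (c + 2)%R]) ((`|x - c| `^ (- s))%R)%:E =
   ((2 `^ (1 - s) - e `^ (1 - s)) / (1 - s))%:E)%E.
Proof.
move=> e0 e2 s1.
pose F := fun y : R => (1 - s)^-1 * (y - c) `^ (1 - s).
have hD : forall x, c < x -> is_derive x 1 F (`|x - c| `^ (- s)).
  by move=> x cx; exact: der_F.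
have hC : forall x, c < x -> {for x, continuous F}.
  move=> x cx; apply: differentiable_continuous; apply/derivable1_diffP.
  by have [] := hD x cx.
have ce : c < c + e by rewrite ltrDl.
rewrite (@continuous_FTC2 _ (fun x => `|x - c| `^ (- s)) F).
- rewrite -EFinB. apply: congr1.
  by rewrite /F (addrC c 2) (addrC c e) !addrK -mulrBr mulrC.
- by rewrite ltrD2l.
- apply: continuous_in_subspaceT => x; rewrite inE/= in_itv/= => /andP[hx _].
  by apply: cont_f; rewrite gt_eqF // (lt_le_trans ce hx).
- split.
  + move=> x; rewrite in_itv/= => /andP[hx _].
    by have [] := hD x (lt_trans ce hx).
  + by apply: cvg_at_right_filter; exact: hC.
  + apply: cvg_at_left_filter; apply: hC.
    by rewrite ltrDl (lt_trans e0 e2).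
- move=> x; rewrite in_itv/= => /andP[hx _].
  have [_ hd] := hD x (lt_trans ce hx).
  by rewrite derive1E hd.
Qed.

Lemma mes_f (c s : R) : measurable_fun setT (fun x : R => `|x - c| `^ s).
Proof.
apply: (@measurableT_comp _ _ _ _ _ _ (@powR R ^~ s) _ (fun x : R => `|x - c|)).
  exact: measurable_powR.
apply: (@measurableT_comp _ _ _ _ _ _ (@Num.Def.normr _ R) _ (fun x : R => x - c)).
  exact: normr_measurable.
by apply: measurable_funB => //; exact: measurable_cst.
Qed.

Lemma ub_bigcup d (T : measurableType d) (m : {measure set T -> \bar R})
  (F : (set T)^nat) (f : T -> \bar R) (K : \bar R) :
  nondecreasing_seq F -> (forall i, measurable (F i)) ->
  (forall i, measurable_fun (F i) f) -> (forall i x, F i x -> (0 <= f x)%E) ->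
  (forall n, (\int[m]_(x in F n) f x <= K)%E) ->
  (\int[m]_(x in \bigcup_n F n) f x <= K)%E.
Proof.
move=> ndF mF mf f0 hK.
have h := @ge0_nondecreasing_set_cvg_integral _ _ _ F f m ndF mF mf f0.
rewrite -(cvg_lim _ h) //.
apply: lime_le; first by apply/cvg_ex; eexists; exact: h.
exact: nearW.
Qed.

Lemma inv_le1 (n : nat) : 0 < (n.+1%:R : R)^-1 /\ (n.+1%:R : R)^-1 <= 1.
Proof.
split; first by rewrite invr_gt0 ltr0n.
by rewrite invf_le1 // ?ler1n // ltr0n.
Qed.

Lemma right_bd (c s : R) : s < 1 ->
  (\int[mu]_(x in `]c, (c + 2)%R]) ((`|x - c| `^ (- s))%R)%:E <=
   ((2 `^ (1 - s)) / (1 - s))%:E)%E.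
Proof.
move=> s1.
pose F := fun n : nat => `[(c + (n.+1%:R)^-1)%R, (c + 2)%R] : set R.
have -> : `]c, (c + 2)%R] = \bigcup_n F n.
  apply/seteqP; split.
  - move=> x; rewrite /= in_itv/= => /andP[cx xc2].
    exists (Num.trunc ((x - c)^-1)) => //; rewrite /F/= in_itv/= xc2 andbT.
    have xc0 : 0 < x - c by rewrite subr_gt0.
    have h := truncnS_gt ((x - c)^-1).
    have h2 : ((Num.trunc (x - c)^-1).+1%:R)^-1 < x - c.
      rewrite -[ltRHS]invrK ltf_pV2 ?posrE ?invr_gt0 ?ltr0n //.
    move: ((Num.Def.trunc _).+1%:R^-1) h2 => t ht; lra.
  - move=> x [n _]; rewrite /F/= !in_itv/= => /andP[h1 h2]; rewrite h2 andbT.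
    have [h3 _] := inv_le1 n; move: (n.+1%:R^-1) h1 h3 => t; lra.
apply: ub_bigcup.
- move=> m n mn; apply/subsetPset => x; rewrite /F/= !in_itv/= => /andP[h1 h2].
  rewrite h2 andbT; apply: le_trans h1; rewrite lerD2l lef_pV2 ?posrE ?ltr0n //.
  by rewrite ler_nat.
- by move=> i; exact: measurable_itv.
- by move=> i; apply: measurable_funTS; apply/measurable_EFinP; exact: mes_f.
- by move=> i x _; rewrite lee_fin powR_ge0.
- move=> n; have [h1 h2] := inv_le1 n.
  rewrite /F ftc_core //; last by move: (n.+1%:R^-1) h1 h2 => t; lra.
  rewrite lee_fin; apply: ler_wpM2r; first by rewrite invr_ge0 subr_ge0 ltW.
  by rewrite gerBl powR_ge0.
Qed.

Lemma left_piece (c e s : R) : 0 < e -> e < 2 -> s < 1 ->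
  (\int[mu]_(x in `[(c - 2)%R, (c - e)%R]) ((`|x - c| `^ (- s))%R)%:E =
   ((2 `^ (1 - s) - e `^ (1 - s)) / (1 - s))%:E)%E.
Proof.
move=> e0 e2 s1.
have E1 : (c - 2 = - (- c + 2))%R by lra.
have E2 : (c - e = - (- c + e))%R by lra.
rewrite E1 E2 integration_by_substitution_oppr; last 2 first.
- by rewrite lerD2l ltW.
- apply: continuous_in_subspaceT => x; rewrite inE/= in_itv/= => /andP[_ hx].
  apply: cont_f; rewrite lt_eqF //; apply: le_lt_trans hx _.
  by rewrite -E2 gtrBl.
have := ftc_core (- c) e s e0 e2 s1; rewrite opprK => <-.
apply: eq_integral => x _ /=.
by rewrite -opprD normrN.
Qed.

Lemma left_bd (c s : R) : s < 1 ->
  (\int[mu]_(x in `[(c - 2)%R, c[) ((`|x - c| `^ (- s))%R)%:E <=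
   ((2 `^ (1 - s)) / (1 - s))%:E)%E.
Proof.
move=> s1.
pose F := fun n : nat => `[(c - 2)%R, (c - (n.+1%:R)^-1)%R] : set R.
have -> : `[(c - 2)%R, c[ = \bigcup_n F n.
  apply/seteqP; split.
  - move=> x; rewrite /= in_itv/= => /andP[xc2 cx].
    exists (Num.trunc ((c - x)^-1)) => //; rewrite /F/= in_itv/= xc2 /=.
    have xc0 : 0 < c - x by rewrite subr_gt0.
    have h := truncnS_gt ((c - x)^-1).
    have h2 : ((Num.trunc (c - x)^-1).+1%:R)^-1 < c - x.
      rewrite -[ltRHS]invrK ltf_pV2 ?posrE ?invr_gt0 ?ltr0n //.
    move: ((Num.Def.trunc _).+1%:R^-1) h2 => t ht; lra.
  - move=> x [n _]; rewrite /F/= !in_itv/= => /andP[h1 h2]; rewrite h1 /=.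
    have [h3 _] := inv_le1 n; move: (n.+1%:R^-1) h2 h3 => t; lra.
apply: ub_bigcup.
- move=> m n mn; apply/subsetPset => x; rewrite /F/= !in_itv/= => /andP[h1 h2].
  rewrite h1 /=; apply: (le_trans h2); rewrite lerD2l lerN2 lef_pV2 ?posrE ?ltr0n //.
  by rewrite ler_nat.
- by move=> i; exact: measurable_itv.
- by move=> i; apply: measurable_funTS; apply/measurable_EFinP; exact: mes_f.
- by move=> i x _; rewrite lee_fin powR_ge0.
- move=> n; have [h1 h2] := inv_le1 n.
  rewrite /F left_piece //; last by move: (n.+1%:R^-1) h1 h2 => t; lra.
  rewrite lee_fin; apply: ler_wpM2r; first by rewrite invr_ge0 subr_ge0 ltW.
  by rewrite gerBl powR_ge0.
Qed.

Lemma one_d (c s : R) : -1 <= c <= 1 -> s < 1 ->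
  (\int[mu]_(x in `[(-1)%R, 1%R]) ((`|x - c| `^ (- s))%R)%:E <=
   (2 * ((2 `^ (1 - s)) / (1 - s)))%:E)%E.
Proof.
move=> /andP[c1 c2] s1.
have mf : measurable_fun setT (fun x : R => ((`|x - c| `^ (- s))%R)%:E).
  by apply/measurable_EFinP; exact: mes_f.
have f0 : forall x : R, (0 <= ((`|x - c| `^ (- s))%R)%:E)%E.
  by move=> x; rewrite lee_fin powR_ge0.
apply: (@le_trans _ _ (\int[mu]_(x in `[(c - 2)%R, c[ `|` `[c, (c + 2)%R]) 
   ((`|x - c| `^ (- s))%R)%:E)%E).
  apply: ge0_subset_integral => //.
  - by apply: measurableU; exact: measurable_itv.
  - exact: measurable_funTS.
  - move=> x; rewrite /= !in_itv/= => /andP[h1 h2].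
    have [xc|xc] := ltP x c.
      by left; apply/andP; split; lra.
    by right; apply/andP; split; lra.
rewrite ge0_integral_setU //; first last.
- apply/disj_setPS => x [] /=; rewrite !in_itv/= => /andP[_ h1] /andP[h2 _].
  by move: h1; rewrite ltNge h2.
- exact: measurable_funTS.
rewrite -(@integral_itv_obnd_cbnd R c (BRight (c + 2)) (fun x => ((`|x - c| `^ (- s))%R)%:E));
  last exact: measurable_funTS.
have E2 : forall y : R, 2 * y = y + y by move=> y; lra.
rewrite E2 EFinD.
apply: leeD; first exact: left_bd.
exact: right_bd.
Qed.

End OneD.

Section Prod.
Variable R : realType.
Local Open Scope ereal_scope.

Lemma int_prod d1 d2 (T1 : measurableType d1) (T2 : measurableType d2)
  (m1 : {sigma_finite_measure set T1 -> \bar R})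
  (m2 : {sigma_finite_measure set T2 -> \bar R}) (g : T1 -> R) (h : T2 -> R) :
  measurable_fun setT g -> measurable_fun setT h ->
  (forall x, (0 <= g x)%R) -> (forall y, (0 <= h y)%R) ->
  \int[m1 \x m2]_z ((g z.1 * h z.2)%R)%:E =
  \int[m1]_x (g x)%:E * \int[m2]_y (h y)%:E.
Proof.
move=> mg mh g0 h0.
rewrite (fubini_tonelli1 (fun z => ((g z.1 * h z.2)%R)%:E)) /=; last 2 first.
- apply/measurable_EFinP; apply: measurable_funM.
  + exact: (measurableT_comp mg measurable_fst).
  + exact: (measurableT_comp mh measurable_snd).
- by move=> z; rewrite lee_fin mulr_ge0.
rewrite /fubini_F.
under eq_integral => x _.
  rewrite (_ : \int[m2]_y _ = (g x)%:E * \int[m2]_y (h y)%:E); last first.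
    rewrite -ge0_integralZl_EFin //; last by apply/measurable_EFinP.
    by move=> y _; rewrite lee_fin.
  over.
rewrite ge0_integralZr //.
- by apply/measurable_EFinP.
- by move=> x _; rewrite lee_fin.
- by apply: integral_ge0 => y _; rewrite lee_fin.
Qed.

End Prod.

Section Ptwise.
Variable R : realType.

Lemma le_powRN (x y r : R) : 0 < x -> x <= y -> 0 <= r -> y `^ (- r) <= x `^ (- r).
Proof.
move=> x0 xy r0; rewrite !powRN lef_pV2 ?posrE ?powR_gt0 //; last exact: lt_le_trans xy.
by apply: ge0_ler_powR => //; rewrite nnegrE ltW // (lt_le_trans x0 xy).
Qed.

Lemma powRD' (x r q : R) : 0 < x -> x `^ (r + q) = x `^ r * x `^ q.
Proof. by move=> x0; rewrite powRD //; apply/implyP => _; rewrite gt_eqF. Qed.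

Lemma powR2 (x r : R) : 0 <= x -> (x ^+ 2) `^ r = x `^ (2 * r).
Proof. by move=> x0; rewrite powRrM -powR_mulrn. Qed.

Lemma ptwise (alpha beta t g s x1 u1 u2 v2 : R) :
  alpha <= 1 -> 0 <= t -> 0 <= g -> t + g = 1 + beta -> s = 1 - alpha + 2 * t ->
  u1 != 0 -> u1 != x1 -> u2 != 0 -> v2 != 0 ->
  `|u1 - x1| `^ (-1 + alpha) / (u1 ^+ 2 + u2 ^+ 2 + v2 ^+ 2) `^ (1 + beta) <=
  (`|u1 - x1| `^ (- s) + `|u1| `^ (- s)) * `|u2| `^ (- g) * `|v2| `^ (- g).
Proof.
move=> a1 t0 g0 tg sE u10 u1x u20 v20.
have d0 : 0 < `|u1 - x1| by rewrite normr_gt0 subr_eq0.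
have a0 : 0 < `|u1| by rewrite normr_gt0.
have b0 : 0 < `|u2| by rewrite normr_gt0.
have c0 : 0 < `|v2| by rewrite normr_gt0.
move: d0 a0 b0 c0.
have -> : u1 ^+ 2 + u2 ^+ 2 + v2 ^+ 2 = `|u1| ^+ 2 + `|u2| ^+ 2 + `|v2| ^+ 2.
  by rewrite !real_normK ?num_real.
set d := `|u1 - x1|; set a := `|u1|; set b := `|u2|; set c := `|v2|.
move=> d0 a0 b0 c0.
have a2 : 0 < a ^+ 2 by rewrite exprn_gt0.
have b2 : 0 < b ^+ 2 by rewrite exprn_gt0.
have c2 : 0 < c ^+ 2 by rewrite exprn_gt0.
set S := a ^+ 2 + b ^+ 2 + c ^+ 2.
have S0 : 0 < S by rewrite /S; lra.
have E1 : S `^ (1 + beta) = S `^ t * S `^ (g / 2) * S `^ (g / 2).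
  by rewrite -!powRD' //; congr (_ `^ _); lra.
have H1 : a `^ (2 * t) <= S `^ t.
  rewrite -powR2; last exact: ltW.
  apply: (@ge0_ler_powR R t t0); rewrite ?nnegrE; try exact: ltW.
  rewrite /S; lra.
have H2 : b `^ g <= S `^ (g / 2).
  rewrite (_ : b `^ g = (b ^+ 2) `^ (g / 2)); last first.
    by rewrite (powR2 _ _ (ltW b0)); congr (_ `^ _); lra.
  apply: (@ge0_ler_powR R (g / 2)); rewrite ?nnegrE; try exact: ltW; first by lra.
  rewrite /S; lra.
have H3 : c `^ g <= S `^ (g / 2).
  rewrite (_ : c `^ g = (c ^+ 2) `^ (g / 2)); last first.
    by rewrite (powR2 _ _ (ltW c0)); congr (_ `^ _); lra.
  apply: (@ge0_ler_powR R (g / 2)); rewrite ?nnegrE; try exact: ltW; first by lra.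
  rewrite /S; lra.
have Hden : a `^ (2 * t) * b `^ g * c `^ g <= S `^ (1 + beta).
  rewrite E1; apply: ler_pM; rewrite ?powR_ge0 ?mulr_ge0 ?powR_ge0 //.
  by apply: ler_pM; rewrite ?powR_ge0.
have Hinv : (S `^ (1 + beta))^-1 <= a `^ (- (2 * t)) * b `^ (- g) * c `^ (- g).
  rewrite !powRN -!invfM lef_pV2 ?posrE ?mulr_gt0 ?powR_gt0 //.
have H4 : d `^ (-1 + alpha) * a `^ (- (2 * t)) <= d `^ (- s) + a `^ (- s).
  have [da|ad] := leP d a.
  - apply: (@le_trans _ _ (d `^ (- s))); last by rewrite lerDl powR_ge0.
    apply: (@le_trans _ _ (d `^ (-1 + alpha) * d `^ (- (2 * t)))).
      by apply: ler_wpM2l; rewrite ?powR_ge0 // le_powRN // mulr_ge0.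
    by rewrite -powRD' // (_ : -1 + alpha + - (2 * t) = - s) //; lra.
  - apply: (@le_trans _ _ (a `^ (- s))); last by rewrite lerDr powR_ge0.
    apply: (@le_trans _ _ (a `^ (-1 + alpha) * a `^ (- (2 * t)))).
      apply: ler_wpM2r; rewrite ?powR_ge0 //.
      rewrite (_ : -1 + alpha = - (1 - alpha)); last by lra.
      by apply: le_powRN => //; [exact: ltW | lra].
    by rewrite -powRD' // (_ : -1 + alpha + - (2 * t) = - s) //; lra.
apply: (@le_trans _ _ (d `^ (-1 + alpha) * (a `^ (- (2 * t)) * b `^ (- g) * c `^ (- g)))).
  by apply: ler_wpM2l; rewrite ?powR_ge0.
rewrite !mulrA; apply: ler_wpM2r; rewrite ?powR_ge0 //.
by apply: ler_wpM2r; rewrite ?powR_ge0.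
Qed.

End Ptwise.


Definition L (R : realType) : {sigma_finite_measure set _ -> \bar R} :=
  @lebesgue_measure R.
Definition leb2 (R : realType) := (L R \x L R)%E.
HB.instance Definition _ (R : realType) := Measure.copy (leb2 R) (L R \x L R)%E.
Lemma leb2_sf (R : realType) : sigma_finite setT (leb2 R).
Proof.
have /sigma_finiteP[F [TF ndF Foo]] := sigma_finiteT (L R).
exists (fun n => F n `*` F n).
 rewrite -setXTT TF predeqE => -[x y]; split.
    move=> [/= [n _ Fnx] [k _ Gky]]; exists (maxn n k) => //; split.
    - by move: x Fnx; exact/subsetPset/ndF/leq_maxl.
    - by move: y Gky; exact/subsetPset/ndF/leq_maxr.
  by move=> [n _ []/= ? ?]; split; exists n.
move=> k; have [? ?] := Foo k.
split; first exact: measurableX.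
by rewrite /leb2 product_measure1E// lte_mul_pinfty// ge0_fin_numE.
Qed.
HB.instance Definition _ (R : realType) :=
  Measure_isSigmaFinite.Build _ _ _ (leb2 R) (leb2_sf R).

Section Main.
Variable R : realType.

Lemma one_d_restr (c s : R) : -1 <= c <= 1 -> s < 1 ->
  (\int[L R]_x (((fun u : R => `|u - c| `^ (- s)) \_ `[(-1)%R, 1%R]) x)%:E <=
   (2 * ((2 `^ (1 - s)) / (1 - s)))%:E)%E.
Proof.
move=> hc s1.
apply: (le_trans _ (@one_d R c s hc s1)).
rewrite [leRHS]integral_mkcond le_eqVlt; apply/orP; left; apply/eqP.
by apply: eq_integral => x _; rewrite restrict_EFin.
Qed.

End Main.

Lemma leb3_null (R : realType) (A1 A2 A3 : set (measurableTypeR R)) :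
  measurable A1 -> measurable A2 -> measurable A3 ->
  (L R A1 = 0 \/ L R A2 = 0 \/ L R A3 = 0)%E ->
  (@leb3 R).-negligible ((A1 `*` A2) `*` A3).
Proof.
move=> m1 m2 m3 h0.
exists ((A1 `*` A2) `*` A3); split => //.
  by apply: measurableX => //; exact: measurableX.
change (@leb3 R) with (leb2 R \x L R)%E.
apply: eq_trans.
  exact: (@product_measure1E _ _ _ _ R (leb2 R) (L R) (A1 `*` A2) A3 (measurableX m1 m2) m3).
change (leb2 R (A1 `*` A2) * L R A3 = 0)%E.
have E2 : (leb2 R (A1 `*` A2) = L R A1 * L R A2)%E.
  exact: (@product_measure1E _ _ _ _ R (L R) (L R) A1 A2 m1 m2).
rewrite E2.
case: h0 => [h|[h|h]]; rewrite h.
- by rewrite mul0e mul0e.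
- by rewrite mule0 mul0e.
- by rewrite mule0.
Qed.

Theorem lemma3p2 (R : realType) (alpha beta : R) :
  0 < alpha -> alpha <= 1 -> 0 <= beta -> beta < alpha / 2 ->
  exists A : R, forall x1 : R, `|x1| <= 1 -> (I_ab alpha beta x1 <= A%:E)%E.
Proof.
move=> a0 a1 b0 ba.
pose t := beta / 2 + alpha / 4.
pose g := 1 + beta - t.
pose s := 1 - alpha + 2 * t.
have s1 : s < 1 by rewrite /s /t; lra.
have g1 : g < 1 by rewrite /g /t; lra.
have t0 : 0 <= t by rewrite /t; lra.
have g0 : 0 <= g by rewrite /g /t; lra.
have tg : t + g = 1 + beta by rewrite /g; lra.
pose K1 := 2 * ((2 `^ (1 - s)) / (1 - s)).
pose K2 := 2 * ((2 `^ (1 - g)) / (1 - g)).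
exists ((K1 + K1) * K2 * K2).
move=> x1 hx1.
have hx1' : -1 <= x1 <= 1 by rewrite -ler_norml.
have h0' : -1 <= (0 : R) <= 1 by apply/andP; split; lra.
pose phi1 := fun u : R => `|u - x1| `^ (- s) + `|u - 0| `^ (- s).
pose psi := fun u : R => `|u - 0| `^ (- g).
pose G1 := phi1 \_ `[(-1)%R, 1%R].
pose H := psi \_ `[(-1)%R, 1%R].
have mG1 : measurable_fun setT G1.
  apply/(measurable_restrictT _ _).1; first exact: measurable_itv.
  by apply: measurable_funTS; apply: measurable_funD; exact: mes_f.
have mH : measurable_fun setT H.
  apply/(measurable_restrictT _ _).1; first exact: measurable_itv.
  by apply: measurable_funTS; exact: mes_f.
have G10 : forall x, 0 <= G1 x.
  move=> x; rewrite /G1 patchE; case: ifP => // _.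
  by rewrite addr_ge0 // powR_ge0.
have H0 : forall x, 0 <= H x.
  by move=> x; rewrite /H patchE; case: ifP => // _; rewrite powR_ge0.
pose B := fun p : (R * R) * R => G1 p.1.1 * H p.1.2 * H p.2.
pose T3 := ((measurableTypeR R * measurableTypeR R) * measurableTypeR R)%type.
have m11 : measurable_fun setT (fun p : T3 => p.1.1).
  exact: (measurableT_comp measurable_fst measurable_fst).
have m12 : measurable_fun setT (fun p : T3 => p.1.2).
  exact: (measurableT_comp measurable_snd measurable_fst).
have m2 : measurable_fun setT (fun p : T3 => p.2) by exact: measurable_snd.
have mB : measurable_fun setT (fun p : T3 => (B p)%:E).
  apply/measurable_EFinP; apply: measurable_funM; first apply: measurable_funM.
  - exact: (measurableT_comp mG1 m11).
  - exact: (measurableT_comp mH m12).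
  - exact: (measurableT_comp mH m2).
pose q := fun p : T3 => p.1.1 ^+ 2 + p.1.2 ^+ 2 + p.2 ^+ 2.
have mq : measurable_fun setT q.
  apply: measurable_funD; first apply: measurable_funD.
  - exact: measurable_funX.
  - exact: measurable_funX.
  - exact: measurable_funX.
have mball : measurable (@ball3 R : set T3).
  have := mq measurableT _ (measurable_itv `]-oo, 1[%R); rewrite setTI.
  congr measurable; apply/seteqP; split => p; by rewrite /ball3 /q /= in_itv.
have IG1 : (\int[L R]_x (G1 x)%:E <= (K1 + K1)%:E)%E.
  pose F1 := (fun u : R => `|u - x1| `^ (- s)) \_ `[(-1)%R, 1%R].
  pose F2 := (fun u : R => `|u - 0| `^ (- s)) \_ `[(-1)%R, 1%R].
  have mF1 : measurable_fun setT F1.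
    apply/(measurable_restrictT _ _).1; first exact: measurable_itv.
    by apply: measurable_funTS; exact: mes_f.
  have mF2 : measurable_fun setT F2.
    apply/(measurable_restrictT _ _).1; first exact: measurable_itv.
    by apply: measurable_funTS; exact: mes_f.
  have -> : (\int[L R]_x (G1 x)%:E = \int[L R]_x ((F1 x)%:E + (F2 x)%:E))%E.
    apply: eq_integral => x _; rewrite /G1 /F1 /F2 !patchE.
    by case: ifP => _; rewrite ?addr0 // EFinD.
  rewrite ge0_integralD //; last 4 first.
  - by move=> x _; rewrite lee_fin /F1 patchE; case: ifP => // _; rewrite powR_ge0.
  - exact/measurable_EFinP.
  - by move=> x _; rewrite lee_fin /F2 patchE; case: ifP => // _; rewrite powR_ge0.
  - exact/measurable_EFinP.
  rewrite EFinD; apply: leeD; exact: one_d_restr.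
have IH : (\int[L R]_x (H x)%:E <= K2%:E)%E.
  exact: one_d_restr.
have step1 : (I_ab alpha beta x1 <= \int[@leb3 R]_(p in @ball3 R) (B p)%:E)%E.
  rewrite /I_ab; apply: ae_ge0_le_integral => //.
  - by move=> p _; rewrite lee_fin /integrand3 divr_ge0 ?powR_ge0.
  - apply: measurable_funTS; apply/measurable_EFinP.
    have -> : integrand3 alpha beta x1 =
        (fun p : T3 => ((fun u : R => `|u - x1| `^ (-1 + alpha)) \o (fun p : T3 => p.1.1)) p *
            ((@powR R ^~ (- (1 + beta))) \o q) p).
      by apply/funext => p; rewrite /integrand3 /= powRN.
    apply: measurable_funM.
    + exact: (measurableT_comp (@mes_f R x1 (-1 + alpha)) m11).
    + exact: (measurableT_comp (measurable_powR _) mq).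
  - by move=> p _; rewrite lee_fin /B !mulr_ge0.
  - by apply: measurable_funTS.
  have L0 : (L R [set (0:R)%R] = 0)%E by exact: lebesgue_measure_set1.
  have Lx : (L R [set x1] = 0)%E by exact: lebesgue_measure_set1.
  have n1 := @leb3_null R [set 0] setT setT (measurable_set1 _) measurableT measurableT (or_introl L0).
  have n2 := @leb3_null R [set x1] setT setT (measurable_set1 _) measurableT measurableT (or_introl Lx).
  have n3 := @leb3_null R setT [set 0] setT measurableT (measurable_set1 _) measurableT (or_intror (or_introl L0)).
  have n4 := @leb3_null R setT setT [set 0] measurableT measurableT (measurable_set1 _) (or_intror (or_intror L0)).
  apply: (negligibleS _ (negligibleU (negligibleU (negligibleU n1 n2) n3) n4)).
  move=> p /= hp; apply: contrapT => hN; apply: hp => hball.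
  have u10 : p.1.1 != 0.
    by apply/eqP => h; apply: hN; left; left; left.
  have u1x : p.1.1 != x1.
    by apply/eqP => h; apply: hN; left; left; right.
  have u20 : p.1.2 != 0.
    by apply/eqP => h; apply: hN; left; right.
  have v20 : p.2 != 0.
    by apply/eqP => h; apply: hN; right.
  rewrite lee_fin.
  have hq : p.1.1 ^+ 2 + p.1.2 ^+ 2 + p.2 ^+ 2 < 1 := hball.
  have bd : forall u : R, u ^+ 2 < 1 -> (`[(-1)%R, 1%R] : set R) u.
    by move=> u hu; rewrite /= in_itv /=; apply/andP; split; nra.
  have s1' := sqr_ge0 p.1.1; have s2' := sqr_ge0 p.1.2; have s3' := sqr_ge0 p.2.
  have h1 : p.1.1 ^+ 2 < 1 by lra.
  have h2 : p.1.2 ^+ 2 < 1 by lra.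
  have h3 : p.2 ^+ 2 < 1 by lra.
  rewrite /B /G1 /H !patchE (mem_set (bd _ h1)) (mem_set (bd _ h2)) (mem_set (bd _ h3)).
  rewrite /phi1 /psi !subr0.
  exact: (@ptwise R alpha beta t g s x1).
have step2 : (\int[@leb3 R]_(p in @ball3 R) (B p)%:E <= \int[@leb3 R]_p (B p)%:E)%E.
  apply: ge0_subset_integral => //.
  by move=> p _; rewrite lee_fin /B !mulr_ge0.
have step3 : (\int[@leb3 R]_p (B p)%:E =
   \int[L R]_x (G1 x)%:E * \int[L R]_x (H x)%:E * \int[L R]_x (H x)%:E)%E.
  have mW : measurable_fun setT (fun w : (measurableTypeR R * measurableTypeR R)%type => G1 w.1 * H w.2).
    apply: measurable_funM.
    + exact: (measurableT_comp mG1 measurable_fst).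
    + exact: (measurableT_comp mH measurable_snd).
  have W0 : forall w : (measurableTypeR R * measurableTypeR R)%type, 0 <= G1 w.1 * H w.2.
    by move=> w; rewrite mulr_ge0.
  have E1 := @int_prod R _ _ _ _ (leb2 R) (L R) (fun w => G1 w.1 * H w.2) H mW mH W0 H0.
  have E2 := @int_prod R _ _ _ _ (L R) (L R) G1 H mG1 mH G10 H0.
  rewrite /B; apply: (etrans E1); congr (_ * _)%E; exact: E2.
apply: (le_trans step1); apply: (le_trans step2); rewrite step3.
rewrite !EFinM; apply: lee_pmul => //.
- by apply: mule_ge0; apply: integral_ge0 => x _; rewrite lee_fin.
- by apply: integral_ge0 => x _; rewrite lee_fin.
- apply: lee_pmul => //; by apply: integral_ge0 => x _; rewrite lee_fin.
Qed.
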